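(* Let $\mathbb{T}^1$ be the one-dimensional connected compact torus (circle), equipped with a bi-invariant metric $d$ and Haar probability measure $\mu$. Let $\phi$ be a positive function on $\mathbb{T}^1$ and $\bar\phi=\int_{\mathbb{T}^1}\phi\circ g\,d\mu(g)$ its $\mathbb{T}^1$-average, regarded as a constant function. Assume $e^{-\kappa}\bar\phi\le\phi$. Then $$d_L(\phi\cdot\mu,\bar\phi\cdot\mu)\le\kappa\,\mathrm{diam}(\mathbb{T}^1).$$
   Context: The Lévy–Prokhorov distance between measures $\mu_1,\mu_2$ on a metric space is $d_L(\mu_1,\mu_2)=\inf\{\varepsilon>0:\ \mu_2(A_\varepsilon)\ge\mu_1(A)\ \text{for all subsets } A\}$, with $A_\varepsilon$ the $\varepsilon$-neighborhood of $A$. *)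

(* Defs.v *)
(* The circle T^1 is modelled as R/Z, represented
   by the fundamental domain [0,1[ of R; Haar probability measure = Lebesgue
   measure restricted to [0,1[ ; the bi-invariant (Riemannian) metric is
   c times the arc-length distance, c > 0 an arbitrary scale. *)
From HB Require Import structures.
From mathcomp Require Import all_boot all_order all_algebra.
From mathcomp Require Import all_classical all_reals all_analysis.
Set Implicit Arguments. Unset Strict Implicit. Unset Printing Implicit Defensive.
Import Order.TTheory GRing.Theory Num.Theory.
Import numFieldNormedType.Exports.
Local Open Scope classical_set_scope.
Local Open Scope ring_scope.

Section circle.
Variable R : realType.

Definition circle : set R := `[0%R, 1%R[%classic.

Definition circ_dist (c : R) (x y : R) : R :=
  c * Num.min `|x - y| (1 - `|x - y|).

Definition circ_diam (c : R) : R :=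
  sup [set circ_dist c xy.1 xy.2 | xy in circle `*` circle].

Definition circ_nbhd (c : R) (A : set R) (e : R) : set R :=
  [set y | circle y /\ exists2 x, A x & circ_dist c x y < e].

Definition wmeas (phi : R -> R) (A : set R) : \bar R :=
  (\int[@lebesgue_measure R]_(x in A) (phi x)%:E)%E.

Definition circ_avg (phi : R -> R) : R :=
  fine (\int[@lebesgue_measure R]_(x in circle) (phi x)%:E)%E.

Definition levy_prokhorov (c : R) (mu1 mu2 : set R -> \bar R) : \bar R :=
  ereal_inf [set e%:E | e in [set e : R | 0 < e /\
     forall A : set R, measurable A -> A `<=` circle ->
       (mu1 A <= mu2 (circ_nbhd c A e))%E]].

End circle.

(* Main.v *)
Require Import Defs.
From HB Require Import structures.
From mathcomp Require Import all_boot all_order all_algebra.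
From mathcomp Require Import all_classical all_reals all_analysis.
From mathcomp Require Import ring lra measurable_realfun.
Import Order.TTheory GRing.Theory Num.Theory.
Local Open Scope classical_set_scope.
Local Open Scope ring_scope.

Section helpers.
Variable R : realType.
Implicit Types x y z p r a b : R.

Definition rot p x : R := if p <= x then x - p else x - p + 1.

Lemma circleP x : @circle R x <-> 0 <= x < 1.
Proof. by rewrite /circle /= in_itv /=. Qed.

Lemma minP a b m : (a <= b -> a <= m) -> (b <= a -> b <= m) -> Num.min a b <= m.
Proof.
move=> H1 H2; rewrite /Order.min; case: ifP => h.
  by apply: H1; rewrite ltW.
by apply: H2; rewrite leNgt h.
Qed.

Lemma min_le1 a b : Num.min a b <= a.
Proof. by rewrite ge_min lexx. Qed.
Lemma min_le2 a b : Num.min a b <= b.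
Proof. by rewrite ge_min lexx orbT. Qed.

Lemma rot_range p x : 0 <= p < 1 -> 0 <= x < 1 -> 0 <= rot p x < 1.
Proof.
move=> /andP[p0 p1] /andP[x0 x1]; rewrite /rot; case: ifP => h; apply/andP; split; lra.
Qed.

Lemma normC x : (0 <= x /\ `|x| = x) \/ (x < 0 /\ `|x| = - x).
Proof. by case: (leP 0 x) => h; [left; rewrite ger0_norm | right; rewrite ltr0_norm]. Qed.

Lemma rotC p x : (p <= x /\ rot p x = x - p) \/ (x < p /\ rot p x = x - p + 1).
Proof. by rewrite /rot; case: (leP p x) => h; [left|right]. Qed.

Lemma rot_dist p x y : 0 <= p < 1 -> 0 <= x < 1 -> 0 <= y < 1 ->
  rot p y <= rot p x -> Num.min `|x - y| (1 - `|x - y|) <= rot p x - rot p y.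
Proof.
move=> /andP[p0 p1] /andP[x0 x1] /andP[y0 y1].
case: (normC (x - y)) => [[h1 ->]|[h1 ->]];
case: (rotC p x) => [[h2 ->]|[h2 ->]]; case: (rotC p y) => [[h3 ->]|[h3 ->]] H;
  by apply: minP => ?; lra.
Qed.

Lemma rot_far p x r : 0 <= p < 1 -> 0 <= x < 1 ->
  r <= Num.min `|x - p| (1 - `|x - p|) -> r <= rot p x <= 1 - r.
Proof.
move=> /andP[p0 p1] /andP[x0 x1]; rewrite le_min.
case: (normC (x - p)) => [[h1 ->]|[h1 ->]];
case: (rotC p x) => [[h2 ->]|[h2 ->]] /andP[H1 H2]; apply/andP; split; lra.
Qed.

Lemma min_lip x y z :
  Num.min `|x - z| (1 - `|x - z|) <= Num.min `|x - y| (1 - `|x - y|) + `|y - z|.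
Proof.
case: (normC (x - z)) => [[h1 ->]|[h1 ->]];
case: (normC (x - y)) => [[h2 ->]|[h2 ->]];
case: (normC (y - z)) => [[h3 ->]|[h3 ->]];
  apply: minP => ?; rewrite -lerBlDr le_min; apply/andP; split; lra.
Qed.

Definition rarc p (al be : R) := [set y : R | (0 <= y < 1) /\ (al < rot p y < be)].

Lemma itv_oo (u v : R) : u <= v -> (@lebesgue_measure R) (`]u, v[%classic) = (v - u)%:E.
Proof.
move=> uv; rewrite lebesgue_measure_itv /= lte_fin; case: ifPn => h.
  by rewrite -EFinD.
have -> : v = u by apply/eqP; rewrite eq_le uv andbT leNgt.
by rewrite subrr.
Qed.

Lemma itv_co (u v : R) : u <= v -> (@lebesgue_measure R) (`[u, v[%classic) = (v - u)%:E.
Proof.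
move=> uv; rewrite lebesgue_measure_itv /= lte_fin; case: ifPn => h.
  by rewrite -EFinD.
have -> : v = u by apply/eqP; rewrite eq_le uv andbT leNgt.
by rewrite subrr.
Qed.

Lemma rarc_meas p (al be : R) : 0 <= p < 1 -> 0 <= al -> al <= be -> be <= 1 ->
  measurable (rarc p al be) /\ lebesgue_measure (rarc p al be) = (be - al)%:E.
Proof.
move=> /andP[p0 p1] al0 ab be1.
case: (leP (p + be) 1) => h1.
  have -> : rarc p al be = `]p + al, p + be[%classic.
    apply/seteqP; split => y /=; rewrite in_itv /=.
      case=> /andP[y0 y1]; case: (rotC p y) => [[h ->]|[h ->]] /andP[H1 H2];
        apply/andP; split; lra.
    move=> /andP[H1 H2]; split; [apply/andP; split; lra|].
    case: (rotC p y) => [[h ->]|[h ->]]; apply/andP; split; lra.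
  split; first exact: measurable_itv.
  apply: eq_trans; first (apply: itv_oo; lra).
  by congr EFin; ring.
case: (leP 1 (p + al)) => h2.
  have -> : rarc p al be = `]p + al - 1, p + be - 1[%classic.
    apply/seteqP; split => y /=; rewrite in_itv /=.
      case=> /andP[y0 y1]; case: (rotC p y) => [[h ->]|[h ->]] /andP[H1 H2];
        apply/andP; split; lra.
    move=> /andP[H1 H2]; split; [apply/andP; split; lra|].
    case: (rotC p y) => [[h ->]|[h ->]]; apply/andP; split; lra.
  split; first exact: measurable_itv.
  apply: eq_trans; first (apply: itv_oo; lra).
  by congr EFin; ring.
have -> : rarc p al be = `]p + al, 1[%classic `|` `[0, p + be - 1[%classic.
  apply/seteqP; split => y /=; rewrite !in_itv /=.
    case=> /andP[y0 y1]; case: (rotC p y) => [[h ->]|[h ->]] /andP[H1 H2].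
      by left; apply/andP; split; lra.
    by right; apply/andP; split; lra.
  case=> /andP[H1 H2]; (split; [apply/andP; split; lra|]);
    case: (rotC p y) => [[h ->]|[h ->]]; apply/andP; split; lra.
split; first by apply: measurableU; exact: measurable_itv.
rewrite measureU; [|exact: measurable_itv|exact: measurable_itv|].
  apply: (@eq_trans _ _ ((1 - (p + al))%:E + (p + be - 1 - 0)%:E)%E).
    congr (_ + _)%E; [apply: itv_oo; lra | apply: itv_co; lra].
  by rewrite -EFinD; congr EFin; ring.
apply/seteqP; split => y //=; rewrite !in_itv /= => -[/andP[H1 H2] /andP[H3 H4]]; lra.
Qed.

Lemma nbhd_meas (c e : R) (A : set R) : 0 < c -> measurable (circ_nbhd c A e).
Proof.
move=> c0.
have -> : circ_nbhd c A e =
    @circle R `&` [set y | exists2 x, A x & circ_dist c x y < e].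
  by apply/seteqP; split => y [].
apply: measurableI; first exact: measurable_itv.
apply: open_measurable.
rewrite openE => y [x Ax hxy]; rewrite /interior /=.
apply/nbhs_ballP; exists ((e - circ_dist c x y) / c) => /=.
  by rewrite divr_gt0 // subr_gt0.
move=> z; rewrite /ball_ /= ltr_pdivlMr // => hz.
exists x => //.
have := ler_wpM2l (ltW c0) (min_lip x y z).
rewrite /circ_dist in hxy hz *; rewrite mulrDr => h.
have : c * `|y - z| = `|y - z| * c by rewrite mulrC.
lra.
Qed.

Lemma dist_self (c e x : R) : 0 < c -> 0 < e -> circ_dist c x x < e.
Proof.
move=> c0 e0; rewrite /circ_dist.
have := min_le1 `|x - x| (1 - `|x - x|); rewrite subrr normr0 => h.
nra.
Qed.

Lemma nbhd_big (c e : R) (A : set R) p : 0 < c -> 0 < e -> measurable A ->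
  A `<=` @circle R -> A !=set0 -> @circle R p -> ~ circ_nbhd c A e p ->
  (lebesgue_measure A + (e / c)%:E + (e / c)%:E <=
     lebesgue_measure (circ_nbhd c A e))%E.
Proof.
move=> c0 e0 mA Ac [x0 Ax0] /circleP hp Np.
set r := e / c.
have r0 : 0 < r by exact: divr_gt0.
have cr : c * r = e by rewrite /r mulrC divfK // gt_eqF.
have far : forall x, A x -> r <= rot p x <= 1 - r.
  move=> x Ax; apply: rot_far => //; first by apply/circleP; apply: Ac.
  rewrite /r ler_pdivrMr // mulrC leNgt; apply/negP => h; apply: Np.
  split; [by apply/circleP | by exists x].
set F := rot p @` A.
have F0 : F !=set0 by exists (rot p x0), x0.
have Flb : has_lbound F by exists r => _ [x Ax <-]; case/andP: (far x Ax).
have Fub : has_ubound F by exists (1 - r) => _ [x Ax <-]; case/andP: (far x Ax).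
set a := inf F; set b := sup F.
have ha : r <= a by apply: lb_le_inf => // _ [x Ax <-]; case/andP: (far x Ax).
have hb : b <= 1 - r by apply: ge_sup => // _ [x Ax <-]; case/andP: (far x Ax).
have Fa : forall x, A x -> a <= rot p x by move=> x Ax; apply: ge_inf => //; exists x.
have Fb : forall x, A x -> rot p x <= b.
  by move=> x Ax; apply: sup_upper_bound; [split|exists x].
have hab : a <= b by apply: le_trans (Fa _ Ax0) (Fb _ Ax0).
have [mL mLm] := rarc_meas p (a - r) a hp (ltac:(lra)) (ltac:(lra)) (ltac:(lra)).
have [mRr mRm] := rarc_meas p b (b + r) hp (ltac:(lra)) (ltac:(lra)) (ltac:(lra)).
set L := rarc p (a - r) a in mL mLm.
set Rr := rarc p b (b + r) in mRr mRm.
have mN := @nbhd_meas c e A c0.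
have sub : A `|` L `|` Rr `<=` circ_nbhd c A e.
  move=> y [[Ay|[y01 /andP[H1 H2]]]|[y01 /andP[H1 H2]]].
  - split; first exact: Ac.
    by exists y => //; exact: dist_self.
  - split; first by apply/circleP.
    have [_ [x Ax <-] hx] := @inf_adherent _ F (rot p y + r - a) (ltac:(lra)) (conj F0 Flb).
    exists x => //.
    have hxa := Fa x Ax.
    have := @rot_dist p x y hp ((circleP _).1 (Ac x Ax)) y01 (ltac:(lra)).
    rewrite /circ_dist -cr => h; rewrite ltr_pM2l //; rewrite -/a in hx; lra.
  - split; first by apply/circleP.
    have [_ [x Ax <-] hx] := @sup_adherent _ F (b + r - rot p y) (ltac:(lra)) (conj F0 Fub).
    exists x => //.
    have hxb := Fb x Ax.
    have := @rot_dist p y x hp y01 ((circleP _).1 (Ac x Ax)) (ltac:(lra)).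
    rewrite /circ_dist distrC -cr => h; rewrite ltr_pM2l //; rewrite -/b in hx; lra.
have dAL : A `&` L = set0.
  apply/seteqP; split => // y [Ay [_ /andP[_ H]]]; have := Fa y Ay; lra.
have dALR : (A `|` L) `&` Rr = set0.
  apply/seteqP; split => // y [[Ay|[_ /andP[_ H]]] [_ /andP[H' _]]];
    [have := Fb y Ay; lra | lra].
have mAL : measurable (A `|` L) by exact: measurableU.
have E : lebesgue_measure (A `|` L `|` Rr) = (lebesgue_measure A + r%:E + r%:E)%E.
  rewrite measureU // measureU //.
  congr (_ + _ + _)%E.
    by apply: (eq_trans mLm); congr EFin; ring.
  by apply: (eq_trans mRm); congr EFin; ring.
rewrite -E; apply: le_measure => //; rewrite inE //; exact: measurableU.
Qed.

End helpers.

Theorem lemma18p0p7 (R : realType) (c : R) (hc : 0 < c)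
  (phi : R -> R) (kappa : R)
  (hint : (@lebesgue_measure R).-integrable (@circle R) (EFin \o phi))
  (hpos : forall x, @circle R x -> 0 < phi x)
  (hlow : forall x, @circle R x -> expR (- kappa) * circ_avg phi <= phi x) :
  (levy_prokhorov c (wmeas phi) (wmeas (fun _ => circ_avg phi))
     <= (kappa * circ_diam c)%:E)%E.
Proof.
have mC : measurable (@circle R) by exact: measurable_itv.
have mC1 : lebesgue_measure (@circle R) = 1%:E.
  by rewrite /circle lebesgue_measure_itv /= lte_fin ltr01 -EFinD subr0.
have [mphi _] := integrableP _ _ _ hint.
set ph := circ_avg phi.
have phE : (ph%:E = \int[lebesgue_measure]_(x in @circle R) (phi x)%:E)%E.
  by rewrite /ph /circ_avg fineK //; exact: integrable_fin_num.
have phi0 : forall x, @circle R x -> (0 <= (phi x)%:E)%E.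
  by move=> x Cx; rewrite lee_fin ltW // hpos.
have ph0 : 0 <= ph by rewrite -lee_fin phE; apply: integral_ge0.
have cstE : forall S, measurable S ->
    wmeas (fun _ => ph) S = (ph%:E * lebesgue_measure S)%E.
  by move=> S mS; rewrite /wmeas; exact: integral_cst.
have kappa0 : 0 <= kappa.
  rewrite leNgt; apply/negP => k0.
  have h1 : ((expR (- kappa) * ph)%:E <= ph%:E)%E.
    rewrite phE.
    have cstG : forall (k : R) S, measurable S ->
      (\int[lebesgue_measure]_(x in S) k%:E = k%:E * lebesgue_measure S)%E.
      by move=> k S mS; exact: integral_cst.
    rewrite -[X in (X <= _)%E]mule1 -mC1 -cstG //.
    apply: ge0_le_integral => //.
    by move=> x Cx; rewrite lee_fin; apply: mulr_ge0 => //; exact: expR_ge0.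
  have : 1 < expR (- kappa) by rewrite expR_gt1 oppr_gt0.
  rewrite lee_fin in h1 => hE.
  have ph00 : ph = 0 by nra.
  have : (\int[lebesgue_measure]_(x in @circle R) `|(phi x)%:E| = 0)%E.
    transitivity (\int[lebesgue_measure]_(x in @circle R) (phi x)%:E)%E.
      apply: eq_integral => x; rewrite inE => Cx; rewrite gee0_abs //; exact: phi0.
    by rewrite -phE ph00.
  move=> H0.
  have := (ae_eq_integral_abs (@lebesgue_measure R) mC mphi).1 H0.
  move=> [N [mN N0 sN]].
  have : ((1%:E : \bar R) <= 0)%E.
    rewrite -N0 -mC1; apply: le_measure; rewrite ?inE //.
    move=> x Cx; apply: sN => /= h; have := h Cx => /= -[] /eqP.
    by rewrite gt_eqF // hpos.
  by rewrite lee_fin ler10.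
have key : forall e, kappa * c / 2 < e -> 0 < e /\ forall A : set R, measurable A ->
    A `<=` @circle R -> (wmeas phi A <= wmeas (fun _ => ph) (circ_nbhd c A e))%E.
  move=> e he.
  have kc : 0 <= kappa * c by apply: mulr_ge0 => //; exact: ltW.
  have e0 : 0 < e by lra.
  split => // A mA AC.
  have mN := @nbhd_meas R c e A hc.
  rewrite cstE //.
  have NC : circ_nbhd c A e `<=` @circle R by move=> y [].
  have IAC : (wmeas phi A <= ph%:E)%E.
    rewrite phE /wmeas; apply: ge0_subset_integral => //.
  have IA0 : (0 <= wmeas phi A)%E.
    by apply: integral_ge0 => x Ax; apply: phi0; exact: AC.
  case: (pselect (A = set0)) => [A0|An0].
    rewrite /wmeas A0 integral_set0; apply: mule_ge0 => //.
  have An : A !=set0 by apply/set0P/eqP.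
  case: (pselect (exists2 p, @circle R p & ~ circ_nbhd c A e p)) => [[p Cp Np]|allN].
    have big := @nbhd_big R c e A p hc e0 mA AC An Cp Np.
    set r := e / c in big.
    have k2r : kappa <= 2 * r.
      by rewrite /r mulrA ler_pdivlMr //; lra.
    have mA1 : (lebesgue_measure A <= 1%:E)%E.
      by rewrite -mC1; apply: le_measure; rewrite ?inE.
    have mA0 : (0 <= lebesgue_measure A)%E by apply: measure_ge0.
    set al := fine (lebesgue_measure A).
    have alE : al%:E = lebesgue_measure A.
      by rewrite fineK // ge0_fin_numE // (le_lt_trans mA1) // ltry.
    have al01 : 0 <= al <= 1 by rewrite -!lee_fin alE mA0 mA1.
    have mCA : measurable (@circle R `\` A) by exact: measurableD.
    have CAE : lebesgue_measure (@circle R `\` A) = (1 - al)%:E.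
      have H : lebesgue_measure (@circle R `\` A) =
          (lebesgue_measure (@circle R) - lebesgue_measure (@circle R `&` A))%E.
        have hC : (lebesgue_measure (@circle R) < +oo)%E by rewrite mC1 ltry.
        by apply: measureD.
      by rewrite H setIidr // mC1 -alE -EFinB.
    have cstG : forall (k : R) S, measurable S ->
      (\int[lebesgue_measure]_(x in S) k%:E = k%:E * lebesgue_measure S)%E.
      by move=> k S mS; exact: integral_cst.
    have mphiCA : measurable_fun (@circle R `\` A) (EFin \o phi).
      by apply: measurable_funS mphi => // x [].
    have Isplit : (\int[lebesgue_measure]_(x in @circle R) (phi x)%:E =
        wmeas phi A + \int[lebesgue_measure]_(x in @circle R `\` A) (phi x)%:E)%E.
      rewrite /wmeas -{1}(setDUK AC); apply: ge0_integral_setU => //.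
      - by rewrite setDUK.
      - by move=> x; rewrite setDUK //; exact: phi0.
      - by rewrite disj_set2E setDIK.
    have ICA : ((expR (- kappa) * ph)%:E * (1 - al)%:E <=
        \int[lebesgue_measure]_(x in @circle R `\` A) (phi x)%:E)%E.
      rewrite -CAE -cstG //; apply: ge0_le_integral => //.
        by move=> x _; rewrite lee_fin; apply: mulr_ge0 => //; exact: expR_ge0.
      by move=> x [Cx _]; rewrite lee_fin; exact: hlow.
    set JC := (\int[lebesgue_measure]_(x in @circle R `\` A) (phi x)%:E)%E in Isplit ICA.
    have JC0 : (0 <= JC)%E by apply: integral_ge0 => x [Cx _]; exact: phi0.
    have JCph : (JC <= ph%:E)%E by rewrite phE Isplit leeDr.
    set iA := fine (wmeas phi A).
    have iAE : iA%:E = wmeas phi A.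
      by rewrite fineK // ge0_fin_numE // (le_lt_trans IAC) // ltry.
    set iC := fine JC.
    have iCE : iC%:E = JC.
      by rewrite fineK // ge0_fin_numE // (le_lt_trans JCph) // ltry.
    have phs : ph = iA + iC.
      have : ph%:E = (iA + iC)%:E by rewrite EFinD iAE iCE phE Isplit.
      by case.
    apply: (@le_trans _ _ (ph%:E * (lebesgue_measure A + r%:E + r%:E))%E); last first.
      by apply: lee_wpmul2l; rewrite ?lee_fin.
    rewrite -alE -!EFinD -EFinM -iAE lee_fin.
    move: ICA; rewrite -iCE -EFinM lee_fin => ICA.
    have hE := expR_ge1Dx (- kappa).
    set E := expR (- kappa) in ICA hE.
    have s1 : ph * (1 - al) * (1 - E) <= ph * (1 - al) * kappa.
      by apply: ler_wpM2l; [apply: mulr_ge0 => //; lra | lra].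
    have s2 : ph * (1 - al) * kappa <= ph * kappa.
      rewrite mulrAC; apply: ler_piMr; [exact: mulr_ge0 | lra].
    have s3 : ph * kappa <= ph * (2 * r) by apply: ler_wpM2l.
    rewrite phs in s1 s2 s3 ICA *.
    nra.
  have -> : circ_nbhd c A e = @circle R.
    apply/seteqP; split => // y Cy.
    by apply: contrapT => Ny; apply: allN; exists y.
  by rewrite mC1 mule1.
have diam : c / 2 <= circ_diam c.
  rewrite /circ_diam; apply: sup_upper_bound.
    split.
      by exists (circ_dist c 0 0), (0, 0) => //; split; apply/circleP; rewrite /= lexx ltr01.
    exists c => _ [[x y] [/= /circleP Cx /circleP Cy] <-] /=.
    rewrite /circ_dist.
    have := @min_le1 R `|x - y| (1 - `|x - y|).
    case: (@normC R (x - y)) => [[h ->]|[h ->]] => hm; nra.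
  exists (0, 1/2).
    by split; apply/circleP; rewrite /= ?lexx ?ltr01 //; apply/andP; split; lra.
  rewrite /circ_dist /= sub0r normrN ger0_norm; last lra.
  have -> : 1 - 1 / 2 = 1 / 2 :> R by lra.
  by rewrite /Order.min ltxx mul1r.
apply/lee_addgt0Pr => eps eps0.
apply: (@le_trans _ _ ((kappa * c / 2 + eps)%:E)).
  by apply: ereal_inf_lbound; exists (kappa * c / 2 + eps) => //; apply: key; lra.
rewrite -EFinD lee_fin.
have : kappa * (c / 2) <= kappa * circ_diam c by apply: ler_wpM2l.
lra.
Qed.
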